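(* Let $a,b>0$, $I=[g(b),b]$, $J=[f(a),a]$, and let $g$ and $f$ be decreasing homeomorphisms of $I$ and $J$ onto their images $g(I)\subseteq I$ and $f(J)\subseteq J$ such that (1) $0$ is a repelling fixed point of $g$ and $\{x_L,x_R\}$ with $x_L<0<x_R$ is an attracting period-two orbit of $g$, $g(x_L)=x_R$, $g(x_R)=x_L$; moreover $b>x_R$; (2) $0$ is a repelling fixed point of $f$ and $\{\overline{x}_L,\overline{x}_R\}$ with $\overline{x}_L<0<\overline{x}_R$ is an attracting period-two orbit of $f$, $f(\overline{x}_L)=\overline{x}_R$, $f(\overline{x}_R)=\overline{x}_L$; moreover $a>\overline{x}_R$; (3) $g^2(x)<x$ for all $x\in(x_R,b]$; (4) $f^2(x)<x$ for all $x\in(\overline{x}_R,a]$. Then there exists a (not necessarily unique) homeomorphism $h:[f(a),\overline{x}_L]\cup[\overline{x}_R,a]\to[g(b),x_L]\cup[x_R,b]$ such that $g(h(x))=h(f(x))$ for all $x\in[f(a),\overline{x}_L]\cup[\overline{x}_R,a]$.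
   Context: A fixed point $p$ of a homeomorphism $\phi$ is attracting if there is a neighbourhood $U$ of $p$ with $\phi^n(x)\to p$ for all $x\in U$, and repelling if it is attracting for $\phi^{-1}$. A period-two orbit $\{p,q\}$ of $\phi$ is attracting if $p$ and $q$ are attracting fixed points of $\phi^2=\phi\circ\phi$. *)

(* Defs.v *)
From Stdlib Require Import Reals Lra.
Open Scope R_scope.

Definition cc (u v : R) : R -> Prop := fun x => u <= x <= v.

Definition unionS (A B : R -> Prop) : R -> Prop := fun x => A x \/ B x.

Definition imageS (phi : R -> R) (D : R -> Prop) : R -> Prop :=
  fun y => exists x, D x /\ phi x = y.

Definition cont_on (D : R -> Prop) (phi : R -> R) : Prop :=
  forall x, D x -> forall eps, 0 < eps ->
    exists delta, 0 < delta /\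
      forall y, D y -> Rabs (y - x) < delta -> Rabs (phi y - phi x) < eps.

Definition homeo_onto (D E : R -> Prop) (phi : R -> R) : Prop :=
  (forall x, D x -> E (phi x)) /\
  (forall y, E y -> exists x, D x /\ phi x = y) /\
  (forall x y, D x -> D y -> phi x = phi y -> x = y) /\
  cont_on D phi /\
  (exists psi : R -> R,
     (forall y, E y -> D (psi y) /\ phi (psi y) = y) /\ cont_on E psi).

Definition decreasing_on (D : R -> Prop) (phi : R -> R) : Prop :=
  forall x y, D x -> D y -> x < y -> phi y < phi x.

Definition decr_homeo_self (D : R -> Prop) (phi : R -> R) : Prop :=
  decreasing_on D phi /\ homeo_onto D (imageS phi D) phi /\
  (forall x, D x -> D (phi x)).

Definition attracting_fp (D : R -> Prop) (phi : R -> R) (p : R) : Prop :=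
  D p /\ phi p = p /\
  exists delta, 0 < delta /\
    forall x, D x -> Rabs (x - p) < delta ->
      Un_cv (fun n => Nat.iter n phi x) p.

(* p is a repelling fixed point of phi on D, i.e. attracting for phi^{-1}:
   phi p = p and there is a neighbourhood U of p on which all iterates of
   phi^{-1} are defined (backward orbit y with y 0 = x, phi (y (n+1)) = y n,
   staying in D) and converge to p. *)
Definition repelling_fp (D : R -> Prop) (phi : R -> R) (p : R) : Prop :=
  D p /\ phi p = p /\
  exists delta, 0 < delta /\
    forall x, Rabs (x - p) < delta ->
      exists y : nat -> R, y O = x /\
        (forall n, D (y (S n)) /\ phi (y (S n)) = y n) /\
        Un_cv y p.

Definition attracting_2orbit (D : R -> Prop) (phi : R -> R) (p q : R) : Prop :=
  p <> q /\ phi p = q /\ phi q = p /\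
  attracting_fp D (fun x => phi (phi x)) p /\
  attracting_fp D (fun x => phi (phi x)) q.

(* Main.v *)
Require Import Defs.
From Stdlib Require Import Reals Lra Lia ClassicalEpsilon.
Open Scope R_scope.

Definition incr_on (D : R -> Prop) (T : R -> R) : Prop :=
  forall x y, D x -> D y -> x < y -> T x < T y.

Lemma incr_le D T x y : incr_on D T -> D x -> D y -> x <= y -> T x <= T y.
Proof. intros H Hx Hy Hxy. destruct (Rle_lt_or_eq_dec _ _ Hxy) as [h|h].
 - left; auto. - subst; lra. Qed.

Lemma incr_rev D T x y : incr_on D T -> D x -> D y -> T x < T y -> x < y.
Proof. intros H Hx Hy Hl. destruct (Rlt_le_dec x y) as [h|h]; auto.
  pose proof (incr_le D T y x H Hy Hx h). lra. Qed.

Lemma incr_inj D T x y : incr_on D T -> D x -> D y -> T x = T y -> x = y.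
Proof. intros H Hx Hy E. destruct (Rtotal_order x y) as [h|[h|h]]; auto.
 - pose proof (H _ _ Hx Hy h); lra. - pose proof (H _ _ Hy Hx h); lra. Qed.

Lemma decr_le D T x y : decreasing_on D T -> D x -> D y -> x <= y -> T y <= T x.
Proof. intros H Hx Hy Hxy. destruct (Rle_lt_or_eq_dec _ _ Hxy) as [h|h].
 - left; auto. - subst; lra. Qed.

Lemma decr_inj D T x y : decreasing_on D T -> D x -> D y -> T x = T y -> x = y.
Proof. intros H Hx Hy E. destruct (Rtotal_order x y) as [h|[h|h]]; auto.
 - pose proof (H _ _ Hx Hy h); lra. - pose proof (H _ _ Hy Hx h); lra. Qed.

Lemma cont_sub D D' T : cont_on D T -> (forall x, D' x -> D x) -> cont_on D' T.
Proof. intros H S x Hx eps He. destruct (H x (S x Hx) eps He) as [d [Hd Hd']].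
 exists d; split; auto. Qed.

Lemma cont_ext D T T' : cont_on D T -> (forall x, D x -> T x = T' x) -> cont_on D T'.
Proof. intros H E x Hx eps He. destruct (H x Hx eps He) as [d [Hd Hd']].
 exists d; split; auto. intros y Hy Hyx. rewrite <- !E by auto. auto. Qed.

Lemma cont_comp D1 D2 p q : cont_on D1 p -> cont_on D2 q -> (forall x, D1 x -> D2 (p x)) ->
  cont_on D1 (fun x => q (p x)).
Proof. intros Hp Hq M x Hx eps He.
 destruct (Hq (p x) (M x Hx) eps He) as [d [Hd Hd']].
 destruct (Hp x Hx d Hd) as [d2 [Hd2 Hd2']].
 exists d2; split; auto. Qed.

Lemma cont_union u1 v1 u2 v2 T : v1 < u2 -> cont_on (cc u1 v1) T -> cont_on (cc u2 v2) T ->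
  cont_on (unionS (cc u1 v1) (cc u2 v2)) T.
Proof. intros Hv H1 H2 x [Hx|Hx] eps He.
 - destruct (H1 x Hx eps He) as [d [Hd Hd']]. exists (Rmin d (u2 - v1)). split.
   + apply Rmin_pos; lra.
   + intros y [Hy|Hy] Hyx; [apply Hd'; auto; eapply Rlt_le_trans; [apply Hyx| apply Rmin_l]|].
     exfalso. pose proof (Rmin_r d (u2 - v1)). unfold cc in *.
     revert Hyx; unfold Rabs; destruct Rcase_abs; lra.
 - destruct (H2 x Hx eps He) as [d [Hd Hd']]. exists (Rmin d (u2 - v1)). split.
   + apply Rmin_pos; lra.
   + intros y [Hy|Hy] Hyx; [|apply Hd'; auto; eapply Rlt_le_trans; [apply Hyx| apply Rmin_l]].
     exfalso. pose proof (Rmin_r d (u2 - v1)). unfold cc in *.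
     revert Hyx; unfold Rabs; destruct Rcase_abs; lra.
Qed.

Lemma mono_cont u v c d T : incr_on (cc u v) T -> (forall x, cc u v x -> cc c d (T x)) ->
  (forall y, cc c d y -> exists x, cc u v x /\ T x = y) -> cont_on (cc u v) T.
Proof. intros HI HM HS x Hx eps He.
 pose proof (HM x Hx) as HTx. unfold cc in HTx.
 destruct (HS (Rmax c (T x - eps/2))) as [x1 [Hx1 E1]].
 { unfold cc, Rmax; destruct Rle_dec; lra. }
 destruct (HS (Rmin d (T x + eps/2))) as [x2 [Hx2 E2]].
 { unfold cc, Rmin; destruct Rle_dec; lra. }
 assert (L1 : x1 <= x).
 { destruct (Rle_lt_dec x1 x) as [h|h]; auto. pose proof (HI _ _ Hx Hx1 h).
   revert E1; unfold Rmax; destruct Rle_dec; lra. }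
 assert (L2 : x <= x2).
 { destruct (Rle_lt_dec x x2) as [h|h]; auto. pose proof (HI _ _ Hx2 Hx h).
   revert E2; unfold Rmin; destruct Rle_dec; lra. }
 set (d1 := if Rlt_dec x1 x then x - x1 else 1).
 set (d2 := if Rlt_dec x x2 then x2 - x else 1).
 assert (P1 : 0 < d1) by (unfold d1; destruct (Rlt_dec x1 x); lra).
 assert (P2 : 0 < d2) by (unfold d2; destruct (Rlt_dec x x2); lra).
 exists (Rmin d1 d2); split; [apply Rmin_pos; auto|].
 intros y Hy Hyx. pose proof (Rmin_l d1 d2). pose proof (Rmin_r d1 d2).
 pose proof (HM y Hy) as HTy; unfold cc in HTy.
 destruct (Rtotal_order y x) as [h|[h|h]].
 - pose proof (HI _ _ Hy Hx h).
   unfold d1 in *; destruct (Rlt_dec x1 x) as [h1|h1].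
   + assert (x1 < y) by (revert Hyx; unfold Rabs; destruct Rcase_abs; lra).
     pose proof (HI _ _ Hx1 Hy H2). revert E1; unfold Rmax; destruct Rle_dec;
     unfold Rabs; destruct Rcase_abs; lra.
   + assert (x1 = x) by lra. subst x1.
     revert E1; unfold Rmax; destruct Rle_dec; lra.
 - subst; rewrite Rminus_diag, Rabs_R0; lra.
 - pose proof (HI _ _ Hx Hy h).
   unfold d2 in *; destruct (Rlt_dec x x2) as [h1|h1].
   + assert (y < x2) by (revert Hyx; unfold Rabs; destruct Rcase_abs; lra).
     pose proof (HI _ _ Hy Hx2 H2). revert E2; unfold Rmin; destruct Rle_dec;
     unfold Rabs; destruct Rcase_abs; lra.
   + assert (x2 = x) by lra. subst x2.
     revert E2; unfold Rmin; destruct Rle_dec; lra.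
Qed.

Definition clamp u v x := Rmax u (Rmin v x).

Lemma ivt_c u v T y : u <= v -> cont_on (cc u v) T ->
  (T u - y) * (T v - y) <= 0 -> exists x, cc u v x /\ T x = y.
Proof. intros Huv HT Hp.
 assert (Cin : forall z, cc u v (clamp u v z)).
 { intros z; unfold cc, clamp, Rmax, Rmin; repeat destruct Rle_dec; lra. }
 assert (Cid : forall z, cc u v z -> clamp u v z = z).
 { intros z Hz; unfold cc, clamp, Rmax, Rmin in *; repeat destruct Rle_dec; lra. }
 assert (Clip : forall z w, Rabs (clamp u v z - clamp u v w) <= Rabs (z - w)).
 { intros z w; unfold clamp, Rmax, Rmin; repeat destruct Rle_dec; unfold Rabs;
   repeat destruct Rcase_abs; lra. }
 assert (C : continuity (fun z => T (clamp u v z) - y)).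
 { unfold continuity, continuity_pt, continue_in, limit1_in, limit_in. simpl.
   unfold R_dist. intros x eps He.
   destruct (HT _ (Cin x) eps He) as [d [Hd Hd']]. exists d; split; auto.
   intros z [_ Hz]. replace (T (clamp u v z) - y - (T (clamp u v x) - y)) with
     (T (clamp u v z) - T (clamp u v x)) by ring.
   apply Hd'; auto. eapply Rle_lt_trans; [apply Clip|auto]. }
 destruct (IVT_cor _ u v C Huv) as [z [Hz E]].
 { rewrite !Cid; unfold cc; auto; lra. }
 exists z; split; auto. rewrite Cid in E; auto. lra.
Qed.

Definition good_sys p q F := p < q /\ cont_on (cc p q) F /\ incr_on (cc p q) F /\ F p = p /\
  (forall x, p < x <= q -> p < F x < x).

Lemma gs_maps p q F : good_sys p q F -> forall x, cc p q x -> cc p q (F x).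
Proof. intros [Hpq [Hc [Hi [Hp Hx]]]] x [h1 h2]. destruct (Rle_lt_or_eq_dec _ _ h1) as [h|h].
 - pose proof (Hx x (conj h h2)); unfold cc; lra.
 - subst; rewrite Hp; unfold cc; lra. Qed.

Lemma iter_maps p q F n : good_sys p q F -> forall x, cc p q x -> cc p q (Nat.iter n F x).
Proof. intros G; induction n; simpl; auto. intros x Hx; apply (gs_maps p q F G); auto. Qed.

Lemma iter_pos p q F n : good_sys p q F -> forall x, p < x <= q -> p < Nat.iter n F x <= q.
Proof. intros G; induction n; simpl; auto. intros x Hx. pose proof (IHn x Hx) as Hn.
 destruct G as [_ [_ [_ [_ Hq]]]]. pose proof (Hq _ Hn). lra. Qed.

Lemma iter_incr p q F n : good_sys p q F -> incr_on (cc p q) (Nat.iter n F).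
Proof. intros G; induction n; simpl; intros x y Hx Hy Hxy; auto.
 pose proof G as G'. destruct G' as [a1 [a2 [Hi a4]]]. apply Hi; try (apply iter_maps; auto).
 apply IHn; auto. Qed.

Lemma iter_cont p q F n : good_sys p q F -> cont_on (cc p q) (Nat.iter n F).
Proof. intros G; induction n; simpl.
 - intros x Hx eps He; exists eps; split; auto.
 - apply (cont_comp _ (cc p q) (Nat.iter n F) F); auto. apply G. intros; apply iter_maps; auto. Qed.

Lemma iter_swap (F : R -> R) n x : Nat.iter n F (F x) = F (Nat.iter n F x).
Proof. induction n; simpl; auto. rewrite IHn; auto. Qed.

Lemma orbit_dec p q F : good_sys p q F -> forall m n, (n <= m)%nat ->
  Nat.iter m F q <= Nat.iter n F q.
Proof. intros G m n H; induction H; [lra|]. simpl.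
 assert (p < Nat.iter m F q <= q) by (apply (iter_pos p q F m G); destruct G; lra).
 destruct G as [_ [_ [_ [_ Hx]]]]. pose proof (Hx _ H0). lra. Qed.

Lemma orbit_cv p q F : good_sys p q F -> Un_cv (fun n => Nat.iter n F q) p.
Proof. intros G. set (u := fun n => Nat.iter n F q).
 assert (Hu : forall n, p < u n <= q) by (intros; apply (iter_pos p q F n G); destruct G; lra).
 destruct (decreasing_cv u) as [L HL].
 { intros n. apply (orbit_dec p q F G); lia. }
 { exists (- p). intros x [i Hi]. unfold opp_seq in Hi. pose proof (Hu i). lra. }
 assert (Lp : p <= L).
 { destruct (Rle_lt_dec p L) as [h|h]; auto. destruct (HL (p - L)) as [N HN]; [lra|].
   pose proof (HN N (le_n N)). pose proof (Hu N). unfold R_dist in H.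
   revert H; unfold Rabs; destruct Rcase_abs; lra. }
 assert (Lq : L <= q).
 { destruct (Rle_lt_dec L q) as [h|h]; auto. destruct (HL (L - q)) as [N HN]; [lra|].
   pose proof (HN N (le_n N)). pose proof (Hu N). unfold R_dist in H.
   revert H; unfold Rabs; destruct Rcase_abs; lra. }
 assert (C1 : Un_cv (fun n => u (S n)) L).
 { intros e He. destruct (HL e He) as [N HN]. exists N; intros n Hn. apply HN; lia. }
 assert (C2 : Un_cv (fun n => u (S n)) (F L)).
 { intros e He. destruct G as [_ [Hc _]].
   destruct (Hc L (conj Lp Lq) e He) as [d [Hd Hd']].
   destruct (HL d Hd) as [N HN]. exists N; intros n Hn. unfold R_dist.
   change (Rabs (F (u n) - F L) < e). apply Hd'. pose proof (Hu n); unfold cc; lra. apply HN; auto. }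
 pose proof (UL_sequence _ _ _ C1 C2) as E.
 destruct (Rle_lt_or_eq_dec _ _ Lp) as [h|h].
 - destruct G as [_ [_ [_ [_ Hx]]]]. pose proof (Hx L (conj h Lq)). lra.
 - subst; auto.
Qed.

Lemma pow2_ge1 n : 1 <= 2 ^ n.
Proof. replace 1 with (2 ^ 0) by (simpl; lra). apply Rle_pow; [lra|lia]. Qed.

Lemma blk_ex t : 0 < t <= 1 -> exists n : nat, 1/2 < 2 ^ n * t <= 1.
Proof. intros Ht.
 assert (K : exists k, 1/2 < 2 ^ k * t).
 { destruct (Pow_x_infinity 2 ltac:(rewrite Rabs_right; lra) (1 / t)) as [N HN].
   exists N. pose proof (HN N (le_n N)). rewrite Rabs_right in H by (left; apply pow_lt; lra).
   assert (1 / t * t = 1) by (field; lra).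
   assert (2 ^ N * t >= 1/t * t) by (apply Rmult_ge_compat_r; lra). lra. }
 destruct K as [k Hk]. induction k.
 - exists 0%nat. simpl in *. lra.
 - destruct (Rlt_le_dec (1/2) (2 ^ k * t)) as [h|h]; auto.
   exists (S k). split; auto. simpl. lra.
Qed.

Lemma blk_uniq t n m : 1/2 < 2 ^ n * t <= 1 -> 1/2 < 2 ^ m * t <= 1 -> n = m.
Proof. intros Hn Hm.
 assert (forall n m, (n < m)%nat -> 1/2 < 2 ^ n * t -> 2 ^ m * t <= 1 -> False).
 { intros a c Hac Ha Hc. assert (2 ^ S a <= 2 ^ c) by (apply Rle_pow; [lra|lia]).
   simpl in H. assert (0 < t).
   { destruct (Rlt_le_dec 0 t) as [h|h]; auto. pose proof (pow_lt 2 a ltac:(lra)).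
     assert (2 ^ a * t <= 0) by nra. lra. }
   assert (2 * 2 ^ a * t <= 2 ^ c * t) by (apply Rmult_le_compat_r; lra). lra. }
 destruct (Nat.lt_trichotomy n m) as [h|[h|h]]; auto.
 - exfalso; eapply H; eauto; apply Hn || apply Hm.
 - exfalso; eapply H; eauto; apply Hn || apply Hm.
Qed.

Definition phi (q : R) (F : R -> R) s := F q + (2*s - 1) * (q - F q).
Definition Nb t := epsilon (inhabits 0%nat) (fun n : nat => 1/2 < 2^n * t <= 1).
Definition Umod p q F t :=
  if Rle_dec t 0 then p else Nat.iter (Nb t) F (phi q F (2^(Nb t) * t)).

Lemma Nb_spec t : 0 < t <= 1 -> 1/2 < 2^(Nb t) * t <= 1.
Proof. intros H. unfold Nb. apply epsilon_spec. apply blk_ex; auto. Qed.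

Lemma Nb_eq t n : 1/2 < 2^n * t <= 1 -> Nb t = n.
Proof. intros H. pose proof (pow2_ge1 n). assert (0 < t).
 { destruct (Rlt_le_dec 0 t) as [h|h]; auto. assert (2 ^ n * t <= 0) by nra. lra. }
 assert (t <= 1) by nra.
 apply (blk_uniq t); auto. apply Nb_spec; lra. Qed.

Lemma U_block p q F t : good_sys p q F -> 0 < t <= 1 ->
  Nat.iter (S (Nb t)) F q < Umod p q F t <= Nat.iter (Nb t) F q.
Proof. intros G Ht. pose proof (Nb_spec t Ht) as HN. set (n := Nb t) in *.
 unfold Umod. destruct Rle_dec as [h|h]; [lra|]. fold n.
 pose proof G as G'. destruct G' as [Hpq [_ [_ [_ Hx]]]].
 pose proof (Hx q ltac:(lra)) as Hq.
 assert (Hs : F q < phi q F (2^n * t) <= q) by (unfold phi; split; nra).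
 split.
 - simpl. rewrite <- iter_swap. apply (iter_incr p q F n G); unfold cc; lra.
 - apply (incr_le (cc p q)); [apply (iter_incr p q F n G)|unfold cc; lra|unfold cc; lra|lra].
Qed.

Lemma model p q F : good_sys p q F -> exists U,
  incr_on (cc 0 1) U /\ (forall t, cc 0 1 t -> cc p q (U t)) /\
  (forall x, cc p q x -> exists t, cc 0 1 t /\ U t = x) /\
  (forall t, cc 0 1 t -> U (t / 2) = F (U t)).
Proof. intros G. pose proof G as G'. destruct G' as [Hpq [Hc [Hi [Hp Hx]]]].
 pose proof (Hx q ltac:(lra)) as Hq.
 assert (U0 : Umod p q F 0 = p) by (unfold Umod; destruct Rle_dec; lra).
 assert (Upos : forall t, 0 < t <= 1 -> p < Umod p q F t <= q).
 { intros t Ht. pose proof (U_block p q F t G Ht).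
   pose proof (iter_pos p q F (S (Nb t)) G q ltac:(lra)). pose proof (iter_pos p q F (Nb t) G q ltac:(lra)). lra. }
 exists (Umod p q F). split; [|split; [|split]].
 - intros s t Hs Ht Hst. destruct (Rle_lt_or_eq_dec 0 s (proj1 Hs)) as [hs|hs].
   2:{ subst s. rewrite U0. apply Upos. unfold cc in *; lra. }
   pose proof (Nb_spec s ltac:(unfold cc in *; lra)) as Ns.
   pose proof (Nb_spec t ltac:(unfold cc in *; lra)) as Nt.
   pose proof (pow_lt 2 (Nb s) ltac:(lra)).
   assert (Le : (Nb t <= Nb s)%nat).
   { destruct (Nat.le_gt_cases (Nb t) (Nb s)) as [h|h]; auto. exfalso.
     assert (2 ^ S (Nb s) <= 2 ^ Nb t) by (apply Rle_pow; [lra|lia]). simpl in H0.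
     assert (0 < t) by lra.
     assert (2 * 2 ^ Nb s * t <= 2 ^ Nb t * t) by (apply Rmult_le_compat_r; lra). nra. }
   destruct (Nat.le_gt_cases (Nb s) (Nb t)) as [h|h].
   + assert (E : Nb s = Nb t) by lia.
     unfold Umod. destruct (Rle_dec s 0); [lra|]. destruct (Rle_dec t 0); [lra|].
     rewrite E in *. assert (2 ^ Nb t * s < 2 ^ Nb t * t) by (apply Rmult_lt_compat_l; lra).
     apply (iter_incr p q F (Nb t) G); unfold cc, phi; try split; nra.
   + pose proof (U_block p q F s G ltac:(unfold cc in *; lra)).
     pose proof (U_block p q F t G ltac:(unfold cc in *; lra)).
     pose proof (orbit_dec p q F G (Nb s) (S (Nb t)) h). lra.
 - intros t [h1 h2]. destruct (Rle_lt_or_eq_dec 0 t h1) as [h|h].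
   + pose proof (Upos t (conj h h2)); unfold cc; lra.
   + subst; rewrite U0; unfold cc; lra.
 - intros x [h1 h2]. destruct (Rle_lt_or_eq_dec p x h1) as [hx|hx].
   2:{ exists 0; subst; split; auto; unfold cc; lra. }
   set (u := fun n => Nat.iter n F q).
   assert (K : exists k, u k < x).
   { destruct (orbit_cv p q F G (x - p)) as [N HN]; [lra|]. exists N.
     pose proof (HN N (le_n N)). unfold R_dist in H. fold u in H.
     unfold u; revert H; unfold Rabs; destruct Rcase_abs; lra. }
   assert (B : exists n, u (S n) < x <= u n).
   { destruct K as [k Hk]. induction k.
     - unfold u in Hk; simpl in Hk; lra.
     - destruct (Rlt_le_dec (u k) x) as [h|h]; auto. exists k; auto. }
   destruct B as [n [Bn1 Bn2]].
   assert (C1 : cont_on (cc (F q) q) (Nat.iter n F)).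
   { apply (cont_sub (cc p q)); [apply iter_cont; auto|unfold cc; intros; lra]. }
   assert (C2 : (Nat.iter n F (F q) - x) * (Nat.iter n F q - x) <= 0).
   { unfold u in *. rewrite iter_swap. simpl in Bn1. nra. }
   destruct (ivt_c (F q) q (Nat.iter n F) x ltac:(lra) C1 C2) as [y [Hy Ey]].
   assert (Fy : F q < y).
   { destruct (Rle_lt_or_eq_dec _ _ (proj1 Hy)) as [h|h]; auto. subst y.
     rewrite iter_swap in Ey. unfold u in Bn1; simpl in Bn1. lra. }
   set (s := (y - F q) / (q - F q) / 2 + 1/2).
   assert (Hs : 1/2 < s <= 1).
   { unfold s. split.
     - assert (0 < (y - F q) / (q - F q)) by (apply Rdiv_lt_0_compat; lra). lra.
     - assert ((y - F q) / (q - F q) <= 1).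
       { apply (Rmult_le_reg_r (q - F q)); [lra|]. unfold cc in Hy.
         field_simplify; lra. }
       lra. }
   assert (Ps : phi q F s = y) by (unfold phi, s; field; lra).
   pose proof (pow_lt 2 n ltac:(lra)). pose proof (pow2_ge1 n).
   set (t := s / 2 ^ n).
   assert (Et : 2 ^ n * t = s) by (unfold t; field; lra).
   assert (Ht : 0 < t <= 1).
   { split. unfold t; apply Rdiv_lt_0_compat; lra. nra. }
   exists t. split; [unfold cc; lra|].
   unfold Umod. destruct Rle_dec; [lra|]. rewrite (Nb_eq t n) by lra.
   rewrite Et, Ps; auto.
 - intros t [h1 h2]. destruct (Rle_lt_or_eq_dec 0 t h1) as [h|h].
   + pose proof (Nb_spec t (conj h h2)) as Nt.
     assert (E : Nb (t/2) = S (Nb t)) by (apply Nb_eq; simpl; lra).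
     unfold Umod. destruct (Rle_dec (t/2) 0); [lra|]. destruct (Rle_dec t 0); [lra|].
     rewrite E. simpl. replace (2 * 2 ^ Nb t * (t / 2)) with (2 ^ Nb t * t) by field. auto.
   + subst. replace (0/2) with 0 by field. rewrite U0; auto.
Qed.

Lemma conj_sys p q F p' q' F' : good_sys p q F -> good_sys p' q' F' -> exists k,
  incr_on (cc p q) k /\ (forall x, cc p q x -> cc p' q' (k x)) /\
  (forall y, cc p' q' y -> exists x, cc p q x /\ k x = y) /\
  (forall x, cc p q x -> k (F x) = F' (k x)).
Proof. intros G G'.
 destruct (model p q F G) as [U [Ui [Um [Us Uc]]]].
 destruct (model p' q' F' G') as [U' [Ui' [Um' [Us' Uc']]]].
 set (V := fun x => epsilon (inhabits 0) (fun t => cc 0 1 t /\ U t = x)).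
 assert (Vs : forall x, cc p q x -> cc 0 1 (V x) /\ U (V x) = x).
 { intros x Hx. unfold V. apply epsilon_spec. auto. }
 assert (VU : forall t, cc 0 1 t -> V (U t) = t).
 { intros t Ht. destruct (Vs (U t) (Um t Ht)) as [h1 h2]. apply (incr_inj _ _ _ _ Ui); auto. }
 assert (Vi : incr_on (cc p q) V).
 { intros x y Hx Hy Hxy. destruct (Vs x Hx), (Vs y Hy).
   apply (incr_rev _ _ _ _ Ui); auto. congruence. }
 exists (fun x => U' (V x)). split; [|split; [|split]].
 - intros x y Hx Hy Hxy. apply Ui'; try apply Vs; auto.
 - intros x Hx. apply Um'. apply Vs; auto.
 - intros y Hy. destruct (Us' y Hy) as [t [Ht E]]. exists (U t). split; auto.
   rewrite VU; auto.
 - intros x Hx. destruct (Vs x Hx) as [h1 h2].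
   assert (H2 : cc 0 1 (V x / 2)) by (unfold cc in *; lra).
   assert (E : F x = U (V x / 2)) by (rewrite Uc; congruence).
   rewrite E, VU; auto.
Qed.

Lemma inv_piece u v c d h psi : incr_on (cc u v) h -> (forall x, cc u v x -> cc c d (h x)) ->
  (forall y, cc c d y -> cc u v (psi y) /\ h (psi y) = y) -> cont_on (cc c d) psi.
Proof. intros Hi Hm Hs. apply (mono_cont c d u v).
 - intros y1 y2 H1 H2 H12. destruct (Hs y1 H1), (Hs y2 H2).
   apply (incr_rev _ _ _ _ Hi); auto. congruence.
 - intros y Hy; apply Hs; auto.
 - intros x Hx. exists (h x). split; auto. destruct (Hs (h x) (Hm x Hx)).
   apply (incr_inj _ _ _ _ Hi); auto.
Qed.


Lemma side_maps (g : R -> R) b xL xR : decreasing_on (cc (g b) b) g ->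
  cc (g b) b xL -> cc (g b) b xR -> g xR = xL -> xR < b ->
  forall x, cc xR b x -> cc (g b) xL (g x).
Proof. intros gd HL HR E Hb x Hx.
 assert (Ix : cc (g b) b x) by (unfold cc in *; lra).
 assert (Ib : cc (g b) b b) by (unfold cc in *; lra).
 split. apply (decr_le _ _ _ _ gd); auto; apply Hx. rewrite <- E. apply (decr_le _ _ _ _ gd); auto; apply Hx.
Qed.

Lemma side_onto (g : R -> R) b xL xR : decreasing_on (cc (g b) b) g -> cont_on (cc (g b) b) g ->
  cc (g b) b xL -> cc (g b) b xR -> g xR = xL -> xR < b ->
  forall y, cc (g b) xL y -> exists x, cc xR b x /\ g x = y.
Proof. intros gd gc HL HR E Hb y Hy. apply ivt_c; [lra| |].
 - apply (cont_sub _ _ _ gc). unfold cc in *; intros; lra.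
 - rewrite E. unfold cc in Hy. nra.
Qed.

Lemma mk_gs (g : R -> R) b xL xR : decreasing_on (cc (g b) b) g -> cont_on (cc (g b) b) g ->
  (forall x, cc (g b) b x -> cc (g b) b (g x)) ->
  cc (g b) b xL -> cc (g b) b xR -> g xL = xR -> g xR = xL -> xR < b ->
  (forall x, xR < x <= b -> g (g x) < x) -> good_sys xR b (fun x => g (g x)).
Proof. intros gd gc gm HL HR E1 E2 Hb H3.
 assert (sub : forall x, cc xR b x -> cc (g b) b x) by (unfold cc in *; intros; lra).
 split; [auto|split; [|split; [|split]]].
 - apply (cont_comp _ (cc (g b) b)); auto. all: apply (cont_sub _ _ _ gc); auto.
 - intros x y Hx Hy Hxy. apply gd; try apply gm; auto; apply gd; auto.
 - congruence.
 - intros x Hx. split; [|apply H3; auto].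
   assert (g x < xL) by (rewrite <- E2; apply gd; auto; unfold cc in *; lra).
   rewrite <- E1. apply gd; auto. apply gm, sub. unfold cc; lra.
Qed.

Theorem theorem5 (a b : R) (g f : R -> R) (xL xR xbL xbR : R)
  (ha : 0 < a) (hb : 0 < b)
  (hI : g b <= b) (hJ : f a <= a)
  (hg : decr_homeo_self (cc (g b) b) g)
  (hf : decr_homeo_self (cc (f a) a) f)
  (hg0 : repelling_fp (cc (g b) b) g 0)
  (hxL : xL < 0) (hxR : 0 < xR)
  (hg2 : attracting_2orbit (cc (g b) b) g xL xR)
  (hgL : g xL = xR) (hgR : g xR = xL) (hbxR : b > xR)
  (hf0 : repelling_fp (cc (f a) a) f 0)
  (hxbL : xbL < 0) (hxbR : 0 < xbR)
  (hf2 : attracting_2orbit (cc (f a) a) f xbL xbR)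
  (hfL : f xbL = xbR) (hfR : f xbR = xbL) (haxR : a > xbR)
  (h3 : forall x, xR < x <= b -> g (g x) < x)
  (h4 : forall x, xbR < x <= a -> f (f x) < x) :
  exists h : R -> R,
    homeo_onto (unionS (cc (f a) xbL) (cc xbR a))
               (unionS (cc (g b) xL) (cc xR b)) h /\
    (forall x, unionS (cc (f a) xbL) (cc xbR a) x -> g (h x) = h (f x)).
Proof.
 destruct hg as [gd [[_ [_ [_ [gc _]]]] gm]].
 destruct hf as [fd [[_ [_ [_ [fc _]]]] fm]].
 destruct hg2 as [_ [_ [_ [[gLI _] [gRI _]]]]].
 destruct hf2 as [_ [_ [_ [[fLI _] [fRI _]]]]].
 pose proof (mk_gs g b xL xR gd gc gm gLI gRI hgL hgR hbxR h3) as GSg.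
 pose proof (mk_gs f a xbL xbR fd fc fm fLI fRI hfL hfR haxR h4) as GSf.
 pose proof (side_maps g b xL xR gd gLI gRI hgR hbxR) as gM.
 pose proof (side_maps f a xbL xbR fd fLI fRI hfR haxR) as fM.
 pose proof (side_onto g b xL xR gd gc gLI gRI hgR hbxR) as gS.
 pose proof (side_onto f a xbL xbR fd fc fLI fRI hfR haxR) as fS.
 assert (gsub : forall x, cc xR b x -> cc (g b) b x) by (unfold cc in *; intros; lra).
 assert (fsub : forall x, cc xbR a x -> cc (f a) a x) by (unfold cc in *; intros; lra).
 assert (gbL : g b <= xL) by (pose proof (gM b ltac:(unfold cc; lra)); unfold cc in *; lra).
 assert (faL : f a <= xbL) by (pose proof (fM a ltac:(unfold cc; lra)); unfold cc in *; lra).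
 destruct (conj_sys xbR a (fun x => f (f x)) xR b (fun x => g (g x)) GSf GSg)
   as [k [ki [km [ks kc]]]].
 set (fi := fun y => epsilon (inhabits 0) (fun x => cc xbR a x /\ f x = y)).
 assert (fis : forall y, cc (f a) xbL y -> cc xbR a (fi y) /\ f (fi y) = y).
 { intros y Hy. unfold fi. apply epsilon_spec. apply fS; auto. }
 assert (fif : forall x, cc xbR a x -> fi (f x) = x).
 { intros x Hx. destruct (fis (f x) (fM x Hx)). apply (decr_inj _ _ _ _ fd); auto. }
 set (h := fun x => if Rle_dec 0 x then k x else g (k (fi x))).
 assert (hR : forall x, cc xbR a x -> h x = k x).
 { intros x Hx; unfold h; destruct Rle_dec; auto; unfold cc in *; lra. }
 assert (hL : forall x, cc (f a) xbL x -> h x = g (k (fi x))).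
 { intros x Hx; unfold h; destruct Rle_dec; auto; unfold cc in *; lra. }
 assert (hRm : forall x, cc xbR a x -> cc xR b (h x)).
 { intros x Hx; rewrite hR; auto. }
 assert (hLm : forall x, cc (f a) xbL x -> cc (g b) xL (h x)).
 { intros x Hx; rewrite hL; auto. apply gM, km, fis; auto. }
 assert (hRi : incr_on (cc xbR a) h).
 { intros x y Hx Hy Hxy. rewrite !hR; auto. }
 assert (hLi : incr_on (cc (f a) xbL) h).
 { intros x y Hx Hy Hxy. rewrite !hL; auto.
   destruct (fis x Hx) as [ax ex]. destruct (fis y Hy) as [ay ey].
   assert (fi y < fi x).
   { destruct (Rlt_le_dec (fi y) (fi x)) as [h1|h1]; auto.
     pose proof (decr_le _ _ _ _ fd (fsub _ ax) (fsub _ ay) h1). lra. }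
   apply gd; try apply gsub; try apply km; auto. }
 assert (hRs : forall y, cc xR b y -> exists x, cc xbR a x /\ h x = y).
 { intros y Hy. destruct (ks y Hy) as [x [Hx E]]. exists x; rewrite hR; auto. }
 assert (hLs : forall y, cc (g b) xL y -> exists x, cc (f a) xbL x /\ h x = y).
 { intros y Hy. destruct (gS y Hy) as [z [Hz Ez]]. destruct (ks z Hz) as [x [Hx Ex]].
   exists (f x). split; [apply fM; auto|]. rewrite hL by (apply fM; auto).
   rewrite fif; auto. congruence. }
 set (Df := unionS (cc (f a) xbL) (cc xbR a)).
 set (Dg := unionS (cc (g b) xL) (cc xR b)).
 assert (hS : forall y, Dg y -> exists x, Df x /\ h x = y).
 { intros y [Hy|Hy].
   - destruct (hLs y Hy) as [x [Hx E]]; exists x; split; auto; left; auto.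
   - destruct (hRs y Hy) as [x [Hx E]]; exists x; split; auto; right; auto. }
 assert (hInj : forall x y, Df x -> Df y -> h x = h y -> x = y).
 { intros x y [Hx|Hx] [Hy|Hy] E.
   - apply (incr_inj _ _ _ _ hLi); auto.
   - pose proof (hLm x Hx); pose proof (hRm y Hy); unfold cc in *; lra.
   - pose proof (hRm x Hx); pose proof (hLm y Hy); unfold cc in *; lra.
   - apply (incr_inj _ _ _ _ hRi); auto. }
 set (psi := fun y => epsilon (inhabits 0) (fun x => Df x /\ h x = y)).
 assert (psis : forall y, Dg y -> Df (psi y) /\ h (psi y) = y).
 { intros y Hy. unfold psi. apply epsilon_spec. auto. }
 exists h. split.
 - split; [|split; [|split; [|split]]].
   + intros x [Hx|Hx]; [left; auto|right; auto].
   + exact hS.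
   + exact hInj.
   + apply cont_union; [lra| |].
     * apply (mono_cont _ _ (g b) xL); auto.
     * apply (mono_cont _ _ xR b); auto.
   + exists psi. split; [exact psis|].
     apply cont_union; [lra| |].
     * apply (inv_piece (f a) xbL _ _ h); auto.
       intros y Hy. destruct (psis y (or_introl Hy)) as [[H1|H1] H2]; auto.
       pose proof (hRm _ H1). unfold cc in *; lra.
     * apply (inv_piece xbR a _ _ h); auto.
       intros y Hy. destruct (psis y (or_intror Hy)) as [[H1|H1] H2]; auto.
       pose proof (hLm _ H1). unfold cc in *; lra.
 - intros x [Hx|Hx].
   + destruct (fis x Hx) as [ax ex].
     assert (FF : cc xbR a (f x)).
     { rewrite <- ex. destruct GSf as [_ [_ [_ [Hp Hq]]]].
       destruct (Rle_lt_or_eq_dec _ _ (proj1 ax)) as [e|e].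
       - pose proof (Hq _ (conj e (proj2 ax))). unfold cc in *; lra.
       - rewrite <- e, Hp. unfold cc; lra. }
     rewrite (hR _ FF), hL by auto. rewrite <- ex at 2. rewrite kc; auto.
   + rewrite hR, hL by (auto; apply fM; auto). rewrite fif; auto.
Qed.
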